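(* Let $\Gamma_1$ be a connected highly-regular graph which is not distance-regular, and let $\Gamma_2$ be a connected highly-regular graph. Then the Cartesian product $\Gamma_1\Box\Gamma_2$ is a connected highly-regular graph which is not distance-regular.
   Context: The Cartesian product $\Gamma_1\Box\Gamma_2$ has vertex set $V(\Gamma_1)\times V(\Gamma_2)$, with $(u_1,v_1)\sim(u_2,v_2)$ iff ($u_1=u_2$ and $v_1\sim v_2$) or ($v_1=v_2$ and $u_1\sim u_2$). A graph $\Gamma$ of order $n$ is highly-regular with collapsed adjacency matrix $C=[c_{i,j}]_{1\le i,j\le m}$, where $2\le m<n$ (the value $m=n$ allowed only when $n=2$), if for every vertex $u$ there is a partition of $V(\Gamma)$ into nonempty sets $V_1(u)=\{u\},\dots,V_m(u)$ such that every $y\in V_j(u)$ is adjacent to exactly $c_{i,j}$ vertices of $V_i(u)$. A connected graph is distance-regular if for all $u,v$ the numbers $|D_1(v)\cap D_{i-1}(u)|$, $|D_1(v)\cap D_i(u)|$, $|D_1(v)\cap D_{i+1}(u)|$ depend only on $i=d(u,v)$, where $D_i(u)=\{v:d(u,v)=i\}$. *)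

(* Defs.v *)
(* Finite simple graphs = symmetric irreflexive relations on a finType. *)
From mathcomp Require Import all_boot.
Unset Printing Implicit Defensive.

Section Graphs.
Variable T : finType.
Implicit Types (e : rel T) (u v : T).

Definition connected_graph e : Prop := forall u v, connect e u v.

Definition walkn e u v (n : nat) : bool :=
  [exists p : n.-tuple T, path e u p && (last u p == v)].

(* D_i(u) = { v : d(u,v) = i } *)
Definition distset e u (i : nat) : {set T} :=
  [set v | walkn e u v i & [forall j : 'I_i, ~~ walkn e u v j]].

(* distance-regular: connected, and |D_1(v) ∩ D_{i-1}(u)|, |D_1(v) ∩ D_i(u)|,
   |D_1(v) ∩ D_{i+1}(u)| depend only on i = d(u,v).
   (For i = 0 we use D_0 in place of D_{-1}; both give 0 since e is irreflexive.) *)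
Definition distance_regular e : Prop :=
  connected_graph e /\
  forall (i : nat) u v u' v',
    v \in distset e u i -> v' \in distset e u' i ->
    [/\ #|distset e v 1 :&: distset e u i.-1| = #|distset e v' 1 :&: distset e u' i.-1|,
        #|distset e v 1 :&: distset e u i| = #|distset e v' 1 :&: distset e u' i|
      & #|distset e v 1 :&: distset e u i.+1| = #|distset e v' 1 :&: distset e u' i.+1|].

(* highly-regular with collapsed adjacency matrix C (indices 1..m are 'I_m, with
   index 1 of the paper being ord 0 here) *)
Definition highly_regular_with e (m : nat) (C : 'I_m -> 'I_m -> nat) : Prop :=
  (2 <= m) && ((m < #|T|) || ((m == #|T|) && (#|T| == 2))) /\
  forall u, exists V : 'I_m -> {set T},
    [/\ forall i : 'I_m, V i != set0,
        forall i : 'I_m, val i = 0 -> V i = [set u],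
        forall x : T, #|[set i | x \in V i]| = 1
      & forall (i j : 'I_m) (y : T), y \in V j -> #|[set x in V i | e y x]| = C i j].

Definition highly_regular e : Prop :=
  exists m (C : 'I_m -> 'I_m -> nat), highly_regular_with e m C.

Definition simple_graph e : Prop := symmetric e /\ irreflexive e.

End Graphs.

Definition cartprod (T1 T2 : finType) (e1 : rel T1) (e2 : rel T2) : rel (T1 * T2) :=
  fun x y => ((x.1 == y.1) && e2 x.2 y.2) || ((x.2 == y.2) && e1 x.1 y.1).
Arguments connected_graph {T} e.
Arguments walkn {T} e u v n.
Arguments distset {T} e u i.
Arguments distance_regular {T} e.
Arguments highly_regular_with {T} e m C.
Arguments highly_regular {T} e.
Arguments simple_graph {T} e.
Arguments cartprod {T1 T2} e1 e2 x y.

(* Main.v *)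
Require Import Defs.
From mathcomp Require Import all_boot.
Set Implicit Arguments. Unset Strict Implicit. Unset Printing Implicit Defensive.


Lemma walknP (T : finType) (e : rel T) u v n :
  reflect (exists p : seq T, [/\ size p = n, path e u p & last u p = v]) (walkn e u v n).
Proof.
apply: (iffP existsP) => [[p /andP[Hp /eqP Hl]]|[p [Hs Hp Hl]]].
  by exists (val p); rewrite size_tuple.
have Hs' : size p == n by rewrite Hs.
by exists (Tuple Hs'); rewrite /= Hp Hl eqxx.
Qed.

Lemma walkn0 (T : finType) (e : rel T) u v : walkn e u v 0 = (u == v).
Proof.
apply/walknP/eqP => [[p [Hs _ Hl]]|->]; last by exists [::].
by case: p Hs Hl => [|x p] //= _ <-.
Qed.

Lemma walkn1 (T : finType) (e : rel T) u v : walkn e u v 1 = e u v.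
Proof.
apply/walknP/idP => [[p [Hs Hp Hl]]|H].
  by case: p Hs Hp Hl => [|x [|y p]] //= _; rewrite andbT => H <-.
by exists [:: v]; rewrite /= H.
Qed.

Lemma walkn_cons (T : finType) (e : rel T) u x v n :
  e u x -> walkn e x v n -> walkn e u v n.+1.
Proof.
move=> H /walknP[p [Hs Hp Hl]]; apply/walknP; exists (x :: p).
by rewrite /= Hs H Hp Hl.
Qed.

Lemma walkn_rcons (T : finType) (e : rel T) u v x n :
  walkn e u v n -> e v x -> walkn e u x n.+1.
Proof.
move=> /walknP[p [Hs Hp Hl]] H; apply/walknP; exists (rcons p x).
by rewrite size_rcons rcons_path last_rcons Hs Hp Hl H.
Qed.

Lemma dsP (T : finType) (e : rel T) u v i :
  reflect (walkn e u v i /\ forall j, j < i -> ~~ walkn e u v j) (v \in distset e u i).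
Proof.
rewrite inE; apply: (iffP andP) => [[H /forallP F]|[H F]]; split => //.
  by move=> j lt; exact: (F (Ordinal lt)).
by apply/forallP => j; apply: F.
Qed.

Lemma ds_uniq (T : finType) (e : rel T) u v i j :
  v \in distset e u i -> v \in distset e u j -> i = j.
Proof.
move=> /dsP[Hi Fi] /dsP[Hj Fj].
case: (ltngtP i j) => // lt.
  by move: (Fj i lt); rewrite Hi.
by move: (Fi j lt); rewrite Hj.
Qed.

Lemma ds0 (T : finType) (e : rel T) u v : (v \in distset e u 0) = (u == v).
Proof.
apply/dsP/idP => [[H _]|H]; first by rewrite -(walkn0 e).
by split => //; rewrite walkn0.
Qed.

Lemma ds1 (T : finType) (e : rel T) u v : irreflexive e ->
  (v \in distset e u 1) = e u v.
Proof.
move=> irr; apply/dsP/idP => [[H _]|H]; first by rewrite -(walkn1 e).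
split; first by rewrite walkn1.
case=> // _; rewrite walkn0; apply/eqP => E; subst; by rewrite irr in H.
Qed.

Lemma liftL (T1 T2 : finType) (e1 : rel T1) (e2 : rel T2) a b w n :
  walkn e1 a b n -> walkn (cartprod e1 e2) (a, w) (b, w) n.
Proof.
move=> /walknP[p [Hs Hp Hl]]; apply/walknP.
exists (map (fun x => (x, w)) p); split.
- by rewrite size_map.
- elim: p a Hp {Hs Hl} => [|x p IH] a //= /andP[h1 h2].
  by rewrite IH // /cartprod /= eqxx h1 orbT.
- by rewrite (last_map (fun x => (x, w))) Hl.
Qed.

Lemma liftR (T1 T2 : finType) (e1 : rel T1) (e2 : rel T2) a b w n :
  walkn e2 a b n -> walkn (cartprod e1 e2) (w, a) (w, b) n.
Proof.
move=> /walknP[p [Hs Hp Hl]]; apply/walknP.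
exists (map (fun x => (w, x)) p); split.
- by rewrite size_map.
- elim: p a Hp {Hs Hl} => [|x p IH] a //= /andP[h1 h2].
  by rewrite IH // /cartprod /= eqxx h1.
- by rewrite (last_map (fun x => (w, x))) Hl.
Qed.

Lemma projS (T1 T2 : finType) (e1 : rel T1) (e2 : rel T2) (p : seq (T1 * T2)) a :
  path (cartprod e1 e2) a p -> exists n1 n2,
  [/\ n1 + n2 = size p, walkn e1 a.1 (last a p).1 n1 & walkn e2 a.2 (last a p).2 n2].
Proof.
elim: p a => [|x p IH] a /=.
  by move=> _; exists 0, 0; rewrite !walkn0 !eqxx.
case/andP => Hx /IH [n1 [n2 [Hs H1 H2]]].
case/orP: Hx => /andP[/eqP E H].
  exists n1, n2.+1; split; first by rewrite addnS Hs.
    by rewrite E.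
  exact: walkn_cons H H2.
exists n1.+1, n2; split; first by rewrite addSn Hs.
  exact: walkn_cons H H1.
by rewrite E.
Qed.

Lemma proj (T1 T2 : finType) (e1 : rel T1) (e2 : rel T2) a1 a2 b1 b2 n :
  walkn (cartprod e1 e2) (a1, a2) (b1, b2) n -> exists n1 n2,
  [/\ n1 + n2 = n, walkn e1 a1 b1 n1 & walkn e2 a2 b2 n2].
Proof.
by case/walknP => p [Hs Hp Hl]; have := projS Hp; rewrite Hl Hs.
Qed.

Lemma D1 (T1 T2 : finType) (e1 : rel T1) (e2 : rel T2) u x w j :
  ((x, w) \in distset (cartprod e1 e2) (u, w) j) = (x \in distset e1 u j).
Proof.
apply/dsP/dsP => [[H F]|[H F]].
  case: (proj H) => n1 [n2 [Hs H1 _]].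
  have Hle : n1 <= j by rewrite -Hs leq_addr.
  have Ej : n1 = j.
    apply/eqP; rewrite eqn_leq Hle /=; rewrite leqNgt; apply/negP => lt.
    by move: (F n1 lt); rewrite (liftL e2 w H1).
  subst n1; split => // k lt; apply/negP => Hk.
  by move: (F k lt); rewrite (liftL e2 w Hk).
split; first exact: liftL.
move=> k lt; apply/negP => /proj [n1 [n2 [Hs H1 _]]].
have lt1 : n1 < j by apply: leq_ltn_trans lt; rewrite -Hs leq_addr.
by move: (F n1 lt1); rewrite H1.
Qed.

Lemma D2 (T1 T2 : finType) (e1 : rel T1) (e2 : rel T2) u v w y i :
  irreflexive e2 -> e2 w y -> v \in distset e1 u i ->
  (v, y) \in distset (cartprod e1 e2) (u, w) i.+1.
Proof.
move=> irr Hwy /dsP[H F]; apply/dsP; split.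
  apply: walkn_rcons (liftL e2 w H) _.
  by rewrite /cartprod /= eqxx Hwy.
move=> k lt; apply/negP => /proj [n1 [n2 [Hs H1 H2]]].
case: n2 Hs H2 => [|n2] Hs H2.
  by move: H2; rewrite walkn0 => /eqP E; subst; rewrite irr in Hwy.
have lt1 : n1 < i by rewrite -ltnS; apply: leq_ltn_trans lt; rewrite -Hs addnS ltnS leq_addr.
by move: (F n1 lt1); rewrite H1.
Qed.

Lemma D2' (T1 T2 : finType) (e1 : rel T1) (e2 : rel T2) u v w y i j :
  irreflexive e2 -> e2 w y -> v \in distset e1 u i ->
  ((v, y) \in distset (cartprod e1 e2) (u, w) j) = (j == i.+1).
Proof.
move=> irr H Hv; have H2 := D2 irr H Hv.
apply/idP/eqP => [Hj|->] //; exact: ds_uniq Hj H2.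
Qed.


Lemma memL (T1 T2 : finType) (A : {set T1}) (w : T2) z1 z2 :
  ((z1, z2) \in [set (x, w) | x in A]) = (z2 == w) && (z1 \in A).
Proof.
apply/imsetP/andP => [[x Hx [-> ->]]|[/eqP -> H]]; first by rewrite eqxx.
by exists z1.
Qed.

Lemma memR (T1 T2 : finType) (A : {set T2}) (w : T1) z1 z2 :
  ((z1, z2) \in [set (w, x) | x in A]) = (z1 == w) && (z2 \in A).
Proof.
apply/imsetP/andP => [[x Hx [-> ->]]|[/eqP -> H]]; first by rewrite eqxx.
by exists z2.
Qed.

Lemma cp_irr (T1 T2 : finType) (e1 : rel T1) (e2 : rel T2) :
  irreflexive e1 -> irreflexive e2 -> irreflexive (cartprod e1 e2).
Proof. by move=> i1 i2 [x1 x2]; rewrite /cartprod /= i1 i2 !andbF. Qed.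

Lemma count_cp (T1 T2 : finType) (e1 : rel T1) (e2 : rel T2) u v w i j :
  irreflexive e1 -> irreflexive e2 -> v \in distset e1 u i ->
  #|distset (cartprod e1 e2) (v, w) 1 :&: distset (cartprod e1 e2) (u, w) j| =
  #|distset e1 v 1 :&: distset e1 u j| + #|[set y | e2 w y & j == i.+1]|.
Proof.
move=> i1 i2 Hv.
set A := distset e1 v 1 :&: distset e1 u j.
set B := [set y | e2 w y & j == i.+1].
have -> : distset (cartprod e1 e2) (v, w) 1 :&: distset (cartprod e1 e2) (u, w) j =
  [set (x, w) | x in A] :|: [set (v, y) | y in B].
  apply/setP => -[z1 z2]; rewrite in_setU in_setI memL memR.
  rewrite ds1; last exact: cp_irr.
  rewrite {1}/cartprod /= /A /B in_setI inE ds1 //.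
  case: (eqVneq z2 w) => [->|nz2]; case: (eqVneq z1 v) => [->|nz1] /=.
  - by rewrite i1 i2.
  - by rewrite D1 orbF.
  - rewrite orbF; case H: (e2 w z2) => //=; by rewrite (D2' j i2 H Hv).
  - by [].
rewrite cardsU !card_imset; try by move=> a b [].
have -> : #|[set (x, w) | x in A] :&: [set (v, y) | y in B]| = 0.
  apply/eqP; rewrite cards_eq0; apply/eqP/setP => -[z1 z2]; rewrite !inE memL memR.
  case: (eqVneq z2 w) => [->|] //=; case: (eqVneq z1 v) => [->|] //=.
    by rewrite /B inE i2 andbF.
  by rewrite andbF.
by rewrite subn0.
Qed.

Lemma nDR (T1 T2 : finType) (e1 : rel T1) (e2 : rel T2) (w : T2) :
  irreflexive e1 -> irreflexive e2 -> connected_graph e1 ->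
  distance_regular (cartprod e1 e2) -> distance_regular e1.
Proof.
move=> i1 i2 c1 [_ DR]; split => // i u v u' v' Hv Hv'.
have := DR i (u, w) (v, w) (u', w) (v', w); rewrite !D1 => /(_ Hv Hv').
rewrite (count_cp w (i.-1) i1 i2 Hv) (count_cp w (i.-1) i1 i2 Hv').
rewrite (count_cp w (i) i1 i2 Hv) (count_cp w (i) i1 i2 Hv').
rewrite (count_cp w (i.+1) i1 i2 Hv) (count_cp w (i.+1) i1 i2 Hv').
by case=> /addIn ? /addIn ? /addIn ?.
Qed.


Lemma two_other (T : finType) (u v x : T) : #|T| = 2 -> u != v -> (x == u) || (x == v).
Proof.
move=> cT uv.
have E : [set u; v] = setT.
  by apply/eqP; rewrite eqEcard subsetT cardsT cards2 uv cT.
by have := in_setT x; rewrite -E in_set2.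
Qed.

Lemma K2_edge (T : finType) (e : rel T) : simple_graph e -> connected_graph e ->
  #|T| = 2 -> forall u v, e u v = (u != v).
Proof.
move=> [sym irr] con cT u v; apply/idP/idP => [H|uv].
  by apply/eqP => E; subst; rewrite irr in H.
case/connectP: (con u v) => [[|x p]] /=; first by move=> _ E; rewrite E eqxx in uv.
case/andP => H _ _.
have xu : x != u by apply/eqP => E; subst; rewrite irr in H.
by case/orP: (two_other x cT uv) => /eqP E; [rewrite E eqxx in xu | rewrite -E].
Qed.

Lemma K2_dr (T : finType) (e : rel T) : simple_graph e -> connected_graph e ->
  #|T| = 2 -> distance_regular e.
Proof.
move=> sg con cT; have eK := K2_edge sg con cT; have irr := sg.2.
have dsbig : forall u v i, 2 <= i -> v \in distset e u i = false.
  move=> u v i hi; apply/negP => /dsP[_ F].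
  case: (eqVneq u v) => [E|uv].
    by move: (F 0 (leq_trans (isT : 0 < 2) hi)); rewrite walkn0 E eqxx.
  by move: (F 1 hi); rewrite walkn1 eK uv.
have c00 : forall u, #|distset e u 1 :&: distset e u 0| = 0.
  move=> u; apply/eqP; rewrite cards_eq0; apply/eqP/setP => x.
  rewrite in_setI ds1 // ds0 inE.
  by case: (eqVneq u x) => [->|]; rewrite ?irr ?andbF.
have c11 : forall u, #|distset e u 1 :&: distset e u 1| = 1.
  move=> u; rewrite setIid.
  have -> : distset e u 1 = [set~ u].
    by apply/setP => x; rewrite ds1 // eK !inE eq_sym.
  by rewrite cardsC1 cT.
have d0 : forall u v, u != v -> #|distset e v 1 :&: distset e u 0| = 1.
  move=> u v uv; have -> : distset e v 1 :&: distset e u 0 = [set u].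
    apply/setP => x; rewrite in_setI ds1 // ds0 !inE eK.
    by case: (eqVneq u x) => [<-|]; rewrite ?andbF // andbT eq_sym.
  by rewrite cards1.
have d1 : forall u v, u != v -> #|distset e v 1 :&: distset e u 1| = 0.
  move=> u v uv; apply/eqP; rewrite cards_eq0; apply/eqP/setP => x.
  rewrite in_setI ds1 // ds1 // !eK inE.
  by case/orP: (two_other x cT uv) => /eqP ->; rewrite ?eqxx ?andbF.
have d2 : forall u v, #|distset e v 1 :&: distset e u 2| = 0.
  move=> u v; apply/eqP; rewrite cards_eq0; apply/eqP/setP => x.
  by rewrite in_setI (dsbig u x 2) // andbF inE.
split => // -[|[|i]] u v u' v' Hv Hv'.
- move: Hv Hv'; rewrite !ds0 => /eqP <- /eqP <-.
  by rewrite /= !c00 !c11.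
- move: Hv Hv'; rewrite !ds1 // !eK => uv uv'.
  by rewrite /= !d0 // !d1 // !d2.
- by rewrite dsbig in Hv.
Qed.

Lemma cp_conn (T1 T2 : finType) (e1 : rel T1) (e2 : rel T2) :
  connected_graph e1 -> connected_graph e2 -> connected_graph (cartprod e1 e2).
Proof.
move=> c1 c2 [u1 u2] [v1 v2].
have L : forall a b w, connect e1 a b -> connect (cartprod e1 e2) (a, w) (b, w).
  move=> a b w /connectP [p Hp Hl]; apply/connectP.
  exists (map (fun x => (x, w)) p); last by rewrite (last_map (fun x => (x, w))) -Hl.
  elim: p a Hp {Hl} => [|x p IH] a //= /andP[h1 h2].
  by rewrite IH // /cartprod /= eqxx h1 orbT.
have R : forall a b w, connect e2 a b -> connect (cartprod e1 e2) (w, a) (w, b).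
  move=> a b w /connectP [p Hp Hl]; apply/connectP.
  exists (map (fun x => (w, x)) p); last by rewrite (last_map (fun x => (w, x))) -Hl.
  elim: p a Hp {Hl} => [|x p IH] a //= /andP[h1 h2].
  by rewrite IH // /cartprod /= eqxx h1.
apply: connect_trans (L _ _ _ (c1 u1 v1)) (R _ _ _ (c2 u2 v2)).
Qed.


Lemma odiv_lt m1 m2 (k : 'I_(m1 * m2)) : k %/ m2 < m1.
Proof.
case: m2 k => [|m2] [k hk] /=; first by rewrite muln0 in hk.
by rewrite ltn_divLR.
Qed.

Lemma omod_lt m1 m2 (k : 'I_(m1 * m2)) : k %% m2 < m2.
Proof.
case: m2 k => [|m2] [k hk] /=; first by rewrite muln0 in hk.
by rewrite ltn_pmod.
Qed.

Definition odiv m1 m2 (k : 'I_(m1 * m2)) : 'I_m1 := Ordinal (odiv_lt k).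
Definition omod m1 m2 (k : 'I_(m1 * m2)) : 'I_m2 := Ordinal (omod_lt k).

Lemma o_inj m1 m2 (k k' : 'I_(m1 * m2)) : odiv k = odiv k' -> omod k = omod k' -> k = k'.
Proof.
move=> /(congr1 val) /= E1 /(congr1 val) /= E2; apply: val_inj => /=.
by rewrite (divn_eq k m2) (divn_eq k' m2) E1 E2.
Qed.

Lemma o_surj m1 m2 (i : 'I_m1) (j : 'I_m2) :
  exists k : 'I_(m1 * m2), odiv k = i /\ omod k = j.
Proof.
have hj := ltn_ord j; have m2p : 0 < m2 by apply: leq_ltn_trans hj.
have hk : i * m2 + j < m1 * m2.
  apply: (@leq_trans (i.+1 * m2)); first by rewrite mulSnr ltn_add2l.
  by rewrite leq_mul2r ltn_ord orbT.
exists (Ordinal hk); split; apply: val_inj => /=.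
  by rewrite divnMDl // divn_small // addn0.
by rewrite modnMDl modn_small.
Qed.

Lemma cls_uniq (T : finType) m (V : 'I_m -> {set T}) x a b :
  (forall x, #|[set i | x \in V i]| = 1) -> x \in V a -> x \in V b -> a = b.
Proof.
move=> H Ha Hb; have /eqP /cards1P [c E] := H x.
have : a \in [set i | x \in V i] by rewrite inE.
have : b \in [set i | x \in V i] by rewrite inE.
by rewrite E !inE => /eqP -> /eqP ->.
Qed.

Lemma cls_mem (T : finType) m (V : 'I_m -> {set T}) x a b :
  (forall x, #|[set i | x \in V i]| = 1) -> x \in V a -> (x \in V b) = (b == a).
Proof.
move=> H Ha; apply/idP/eqP => [Hb|->//]; exact: cls_uniq H Hb Ha.
Qed.



Lemma cp_hr (T1 T2 : finType) (e1 : rel T1) (e2 : rel T2) m1 C1 m2 C2 :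
  irreflexive e1 -> irreflexive e2 ->
  highly_regular_with e1 m1 C1 -> m1 < #|T1| ->
  highly_regular_with e2 m2 C2 -> highly_regular (cartprod e1 e2).
Proof.
move=> i1 i2 [c1 H1] lt1 [/andP [m2ge c2] H2].
have m1ge : 2 <= m1 by case/andP: c1.
have m2le : m2 <= #|T2| by case/orP: c2 => [/ltnW //|/andP [/eqP -> _]].
exists (m1 * m2).
exists (fun k l => (omod k == omod l) * C1 (odiv k) (odiv l)
                 + (odiv k == odiv l) * C2 (omod k) (omod l)).
split.
  have h1 : 1 < m1 * m2 by rewrite (@leq_trans (2 * 2)) // leq_mul // ltnW.
  have h2 : m1 * m2 < #|T1| * #|T2|.
    by apply: (ltn_mull (leq_trans (ltnW m2ge) m2le) lt1 m2le).
  by rewrite h1 card_prod h2.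
move=> [u1 u2].
have [V1 [n1 z1 p1 k1]] := H1 u1.
have [V2 [n2 z2 p2 k2]] := H2 u2.
exists (fun k => setX (V1 (odiv k)) (V2 (omod k))); split.
- move=> k; case/set0Pn: (n1 (odiv k)) => a Ha; case/set0Pn: (n2 (omod k)) => b Hb.
  by apply/set0Pn; exists (a, b); rewrite in_setX Ha Hb.
- move=> k k0.
  have ha : val (odiv k) = 0 by rewrite /= k0 div0n.
  have hb : val (omod k) = 0 by rewrite /= k0 mod0n.
  rewrite (z1 _ ha) (z2 _ hb).
  by apply/setP => -[a b]; rewrite in_setX !inE xpair_eqE.
- move=> [x1 x2].
  have /eqP /cards1P [a Ea] := p1 x1; have /eqP /cards1P [b Eb] := p2 x2.
  have [k0 [Ek1 Ek2]] := o_surj a b.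
  have -> : [set k | (x1, x2) \in setX (V1 (odiv k)) (V2 (omod k))] = [set k0].
    have Ha : x1 \in V1 a by have := set11 a; rewrite -Ea inE.
    have Hb : x2 \in V2 b by have := set11 b; rewrite -Eb inE.
    apply/setP => k; rewrite !inE (cls_mem _ p1 Ha) (cls_mem _ p2 Hb).
    apply/andP/eqP => [[/eqP Ha1 /eqP Hb1]|->]; last by rewrite Ek1 Ek2 !eqxx.
    by apply: o_inj; [rewrite Ha1 Ek1 | rewrite Hb1 Ek2].
  by rewrite cards1.
- move=> k l [y1 y2]; rewrite in_setX => /andP [Hy1 Hy2].
  set a := odiv k; set b := omod k.
  set A := [set x1 in V1 a | e1 y1 x1 && (b == omod l)].
  set B := [set x2 in V2 b | e2 y2 x2 && (a == odiv l)].
  have -> : [set x in setX (V1 a) (V2 b) | cartprod e1 e2 (y1, y2) x] =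
      [set (x, y2) | x in A] :|: [set (y1, x) | x in B].
    apply/setP => -[w1 w2]; rewrite in_setU !inE.
    rewrite /cartprod /= memL memR /A /B !inE.
    case: (eqVneq y1 w1) => [<-|n1']; case: (eqVneq y2 w2) => [<-|n2'] /=.
    - by rewrite i1 i2 !andbF.
    - rewrite (cls_mem _ p1 Hy1) orbF.
      by case: (a == odiv l); case: (w2 \in V2 b); case: (e2 y2 w2).
    - rewrite (cls_mem _ p2 Hy2) orbF.
      by case: (b == omod l); case: (w1 \in V1 a); case: (e1 y1 w1).
    - by rewrite !andbF.
  rewrite cardsU !card_imset; try by move=> ? ? [].
  have -> : #|[set (x, y2) | x in A] :&: [set (y1, x) | x in B]| = 0.
    apply/eqP; rewrite cards_eq0; apply/eqP/setP => -[w1 w2]; rewrite !inE memL memR.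
    case: (eqVneq w2 y2) => [->|] //=; case: (eqVneq w1 y1) => [->|] //=.
      by rewrite !inE i2 /= !andbF.
    by move=> _; rewrite andbF.
  rewrite subn0; congr (_ + _).
    rewrite /A; case: (b == omod l).
      rewrite mul1n -(k1 a (odiv l) y1 Hy1); apply: eq_card => x.
      by rewrite !inE andbT.
    rewrite mul0n; apply/eqP; rewrite cards_eq0; apply/eqP/setP => x.
    by rewrite !inE !andbF.
  rewrite /B; case: (a == odiv l).
    rewrite -(k2 b (omod l) y2 Hy2) mul1n; apply: eq_card => x.
    by rewrite !inE andbT.
  rewrite mul0n; apply/eqP; rewrite cards_eq0; apply/eqP/setP => x.
  by rewrite !inE !andbF.
Qed.

Theorem propositionA2 (T1 T2 : finType) (e1 : rel T1) (e2 : rel T2) :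
  simple_graph e1 -> simple_graph e2 ->
  connected_graph e1 -> highly_regular e1 -> ~ distance_regular e1 ->
  connected_graph e2 -> highly_regular e2 ->
  [/\ connected_graph (cartprod e1 e2), highly_regular (cartprod e1 e2)
    & ~ distance_regular (cartprod e1 e2)].
Proof.
move=> [s1 i1] [s2 i2] c1 [m1 [C1 h1]] ndr c2 [m2 [C2 h2]].
have lt1 : m1 < #|T1|.
  case: (h1) => /andP [_ /orP [//|/andP [_ /eqP cT]]] _.
  by exfalso; apply: ndr; apply: K2_dr (conj s1 i1) c1 cT.
split.
- exact: cp_conn.
- exact: cp_hr i1 i2 h1 lt1 h2.
- move=> dr.
  have : 0 < #|T2|.
    case: h2 => /andP [m2ge c2'] _.
    case/orP: c2' => [|/andP [/eqP <- _]]; last exact: ltnW.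
    by move/ltnW; apply: leq_trans; apply: ltnW.
  case/card_gt0P => w _.
  by apply: ndr; apply: (nDR w i1 i2 c1 dr).
Qed.
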